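(* Let $f:[0,\infty)\to\mathbb{R}$ be differentiable, let $0<a<b<\infty$, and suppose $f'$ is Lebesgue integrable on $[a,b]$. Let $m\in(0,1]$, $q>1$ and $0<p<q$, and suppose $|f'|^q$ is $(1,m)$-GA-convex on $[0,\max\{a^{1/m},b\}]$. Then \[ \biggl|\frac{b^2f(b)-a^2f(a)}{2}-\int_a^b xf(x)\,dx\biggr|\le\frac{(\ln b-\ln a)^{1-1/q}}{2}\Bigl(\frac{1}{3p}\Bigr)^{1/q}\bigl[L\bigl(a^{3(q-p)/(q-1)},b^{3(q-p)/(q-1)}\bigr)\bigr]^{1-1/q}\Bigl\{m\bigl[L(a^{3p},b^{3p})-a^{3p}\bigr]\bigl|f'(a^{1/m})\bigr|^q+\bigl[b^{3p}-L(a^{3p},b^{3p})\bigr]|f'(b)|^q\Bigr\}^{1/q}. \]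
   Context: For $c>0$, $h:[0,c]\to\mathbb{R}$ and $(\alpha,m)\in(0,1]^2$, $h$ is called $(\alpha,m)$-GA-convex on $[0,c]$ if $h\bigl(x^\lambda y^{m(1-\lambda)}\bigr)\le\lambda^\alpha h(x)+m(1-\lambda^\alpha)h(y)$ for all $x,y\in[0,c]$ and all $\lambda\in[0,1]$ (with the convention $0^0=1$). For $x,y>0$, $x\neq y$, the logarithmic mean is $L(x,y)=\frac{y-x}{\ln y-\ln x}$. *)

(* Defs.v *)
From Stdlib Require Import Reals Lra.
Open Scope R_scope.

(* Real power x^y for x >= 0, with the conventions 0^0 = 1 and 0^y = 0 for
   y <> 0 (Stdlib's Rpower 0 y = 1 for all y, which is wrong for y > 0). *)
Definition rpow (x y : R) : R :=
  if Req_EM_T x 0 then (if Req_EM_T y 0 then 1 else 0) else Rpower x y.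

Definition GA_convex (alpha m c : R) (h : R -> R) : Prop :=
  forall x y lam, 0 <= x <= c -> 0 <= y <= c -> 0 <= lam <= 1 ->
    h (rpow x lam * rpow y (m * (1 - lam)))
      <= rpow lam alpha * h x + m * (1 - rpow lam alpha) * h y.

Definition logmean (x y : R) : R := (y - x) / (ln y - ln x).

Definition right_deriv (f : R -> R) (x l : R) : Prop :=
  forall eps, 0 < eps -> exists delta, 0 < delta /\
    forall h, 0 < h < delta -> Rabs ((f (x + h) - f x) / h - l) < eps.

(* Main.v *)
Require Import Defs.
From Stdlib Require Import Reals Lra.
Open Scope R_scope.

Lemma rpow_pos_eq x y : 0 < x -> rpow x y = Rpower x y.
Proof. intro H. unfold rpow. destruct (Req_EM_T x 0); [lra|auto]. Qed.

Lemma rpow_ge0 x y : 0 <= rpow x y.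
Proof. unfold rpow, Rpower. destruct (Req_EM_T x 0); [destruct (Req_EM_T y 0); lra|].
  left; apply exp_pos. Qed.

Lemma rpow_0_l y : y <> 0 -> rpow 0 y = 0.
Proof. intro H. unfold rpow. destruct (Req_EM_T 0 0); [|lra]. destruct (Req_EM_T y 0); lra. Qed.

Lemma rpow_mult_distr x y z : 0 <= x -> 0 <= y -> z <> 0 ->
  rpow (x*y) z = rpow x z * rpow y z.
Proof. intros Hx Hy Hz.
  destruct (Req_dec x 0) as [->|Hx0]. { rewrite Rmult_0_l, rpow_0_l; auto; ring. }
  destruct (Req_dec y 0) as [->|Hy0]. { rewrite Rmult_0_r, rpow_0_l; auto; ring. }
  rewrite !rpow_pos_eq; try lra. 2: apply Rmult_lt_0_compat; lra.
  rewrite Rpower_mult_distr; lra. Qed.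

Lemma rpow_inv_q y q : 0 <= y -> 0 < q -> rpow (rpow y q) (1/q) = y.
Proof. intros Hy Hq. destruct (Req_dec y 0) as [->|Hy0].
  { rewrite (rpow_0_l q) by lra. apply rpow_0_l. unfold Rdiv. rewrite Rmult_1_l. apply Rinv_neq_0_compat; lra. }
  rewrite (rpow_pos_eq y q) by lra. rewrite rpow_pos_eq by (unfold Rpower; apply exp_pos).
  rewrite Rpower_mult. replace (q * (1/q)) with 1 by (field; lra). apply Rpower_1; lra. Qed.

Lemma rpow_le_base x y z : 0 <= x <= y -> 0 < z -> rpow x z <= rpow y z.
Proof. intros Hxy Hz. destruct (Req_dec x 0) as [->|Hx0].
  { rewrite rpow_0_l by lra. apply rpow_ge0. }
  rewrite !rpow_pos_eq by lra. apply Rle_Rpower_l; lra. Qed.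

Lemma rpow_1 x : 0 <= x -> rpow x 1 = x.
Proof. intro H. destruct (Req_dec x 0) as [->|Hx0]. { apply rpow_0_l; lra. }
  rewrite rpow_pos_eq by lra. apply Rpower_1; lra. Qed.

Lemma exp_conv l x y : 0 <= l <= 1 ->
  exp (l*x + (1-l)*y) <= l * exp x + (1-l) * exp y.
Proof. intros Hl. set (c := l*x+(1-l)*y).
  assert (E1: exp x = exp c * exp (x - c)) by (rewrite <- exp_plus; f_equal; ring).
  assert (E2: exp y = exp c * exp (y - c)) by (rewrite <- exp_plus; f_equal; ring).
  pose proof (exp_ineq1_le (x-c)). pose proof (exp_ineq1_le (y-c)). pose proof (exp_pos c).
  rewrite E1, E2.
  assert (l * (exp c * exp (x - c)) >= l * (exp c * (1 + (x-c)))).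
  { apply Rle_ge, Rmult_le_compat_l; [lra|]. apply Rmult_le_compat_l; lra. }
  assert ((1-l) * (exp c * exp (y - c)) >= (1-l) * (exp c * (1 + (y-c)))).
  { apply Rle_ge, Rmult_le_compat_l; [lra|]. apply Rmult_le_compat_l; lra. }
  assert (l * (exp c * (1 + (x-c))) + (1-l) * (exp c * (1 + (y-c))) = exp c).
  { unfold c. ring. } lra. Qed.

Lemma amgm U V al : 0 <= U -> 0 <= V -> 0 < al < 1 ->
  rpow U (1-al) * rpow V al <= (1-al)*U + al*V.
Proof. intros HU HV Ha.
  destruct (Req_dec U 0) as [->|HU0].
  { rewrite rpow_0_l by lra. nra. }
  destruct (Req_dec V 0) as [->|HV0].
  { rewrite (rpow_0_l al) by lra. nra. }
  rewrite !rpow_pos_eq by lra. unfold Rpower. rewrite <- exp_plus.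
  replace (U) with (exp (ln U)) at 2 by (apply exp_ln; lra).
  replace (V) with (exp (ln V)) at 2 by (apply exp_ln; lra).
  replace ((1 - al) * ln U + al * ln V) with ((1-al) * ln U + (1 - (1-al)) * ln V) by ring.
  replace (al * exp (ln V)) with ((1 - (1-al)) * exp (ln V)) by ring.
  apply exp_conv; lra. Qed.

Lemma logmean_bounds A B : 0 < A < B ->
  A < (B - A) / (ln B - ln A) < B.
Proof. intros H. set (d := ln B - ln A).
  assert (Hd: 0 < d) by (unfold d; pose proof (ln_increasing A B); lra).
  assert (EB: B = A * exp d).
  { unfold d. replace (ln B - ln A) with (ln B + - ln A) by ring. rewrite exp_plus, exp_Ropp, !exp_ln by lra. field; lra. }
  assert (EA: A = B * exp (-d)).
  { unfold d. replace (- (ln B - ln A)) with (ln A + - ln B) by ring. rewrite exp_plus, exp_Ropp, !exp_ln by lra. field; lra. }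
  pose proof (exp_ineq1 d ltac:(lra)). pose proof (exp_ineq1 (-d) ltac:(lra)).
  assert (B - A > A * d) by nra.
  assert (B - A < B * d) by nra.
  split.
  - apply (Rmult_lt_reg_r d); [lra|]. unfold Rdiv. rewrite Rmult_assoc, Rinv_l by lra. lra.
  - apply (Rmult_lt_reg_r d); [lra|]. unfold Rdiv. rewrite Rmult_assoc, Rinv_l by lra. lra.
Qed.

Lemma cmp F F' G G' a b : a < b ->
  (forall x, a <= x <= b -> derivable_pt_lim F x (F' x)) ->
  (forall x, a <= x <= b -> derivable_pt_lim G x (G' x)) ->
  (forall x, a <= x <= b -> Rabs (F' x) <= G' x) ->
  Rabs (F b - F a) <= G b - G a.
Proof. intros Hab HF HG Hle.
  destruct (MVT_cor2 (fun x => G x - F x) (fun x => G' x - F' x) a b Hab) as [c [Hc1 Hc2]].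
  { intros y Hy. apply derivable_pt_lim_minus; auto. }
  destruct (MVT_cor2 (fun x => G x + F x) (fun x => G' x + F' x) a b Hab) as [d [Hd1 Hd2]].
  { intros y Hy. apply derivable_pt_lim_plus; auto. }
  assert (Hc: 0 <= G' c - F' c). { pose proof (Hle c ltac:(lra)). pose proof (Rle_abs (F' c)); lra. }
  assert (Hd: 0 <= G' d + F' d). { pose proof (Hle d ltac:(lra)). pose proof (Rle_abs (- F' d)). rewrite Rabs_Ropp in *; lra. }
  assert (0 <= (G' c - F' c) * (b - a)) by (apply Rmult_le_pos; lra).
  assert (0 <= (G' d + F' d) * (b - a)) by (apply Rmult_le_pos; lra).
  apply Rabs_le; lra. Qed.

Lemma ftc (f f' : R -> R) a b (Ha : 0 < a) (Hab : a < b)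
  (Hder : forall x, 0 < x -> derivable_pt_lim f x (f' x))
  (pr : Riemann_integrable (fun x => x * f x) a b) :
  exists P, (forall x, a <= x <= b -> derivable_pt_lim P x (x * f x)) /\
     RiemannInt pr = P b - P a.
Proof.
  assert (C0 : forall x, a <= x <= b -> continuity_pt (fun x => x * f x) x).
  { intros x Hx. apply (continuity_pt_mult (fun x => x) f).
    - apply derivable_continuous_pt. exists 1. apply derivable_pt_lim_id.
    - apply derivable_continuous_pt. exists (f' x). apply Hder; lra. }
  assert (h : a <= b) by lra.
  exists (primitive h (FTC_P1 h C0)). split.
  - intros x Hx. exact (RiemannInt_P28 h C0 Hx).
  - unfold primitive. destruct (Rle_dec a b); [|lra]. destruct (Rle_dec b b); [|lra].
    destruct (Rle_dec a a); [|lra]. idtac.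
    rewrite RiemannInt_P9. rewrite (RiemannInt_P5 pr (FTC_P1 h C0 r r0)). ring.
Qed.
From Coquelicot Require Import Coquelicot.

Theorem corollary3p6
  (f f' : R -> R) (a b m p q : R)
  (Hder0 : right_deriv f 0 (f' 0))
  (Hder : forall x, 0 < x -> derivable_pt_lim f x (f' x))
  (Ha : 0 < a) (Hab : a < b)
  (Hm : 0 < m <= 1) (Hq : 1 < q) (Hp : 0 < p < q)
  (Hconv : GA_convex 1 m (Rmax (rpow a (1 / m)) b)
             (fun x => rpow (Rabs (f' x)) q))
  (pr : Riemann_integrable (fun x => x * f x) a b) :
  Rabs ((b ^ 2 * f b - a ^ 2 * f a) / 2 - RiemannInt pr)
  <= rpow (ln b - ln a) (1 - 1 / q) / 2
     * rpow (1 / (3 * p)) (1 / q)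
     * rpow (logmean (rpow a (3 * (q - p) / (q - 1)))
                     (rpow b (3 * (q - p) / (q - 1)))) (1 - 1 / q)
     * rpow (m * (logmean (rpow a (3 * p)) (rpow b (3 * p)) - rpow a (3 * p))
               * rpow (Rabs (f' (rpow a (1 / m)))) q
             + (rpow b (3 * p) - logmean (rpow a (3 * p)) (rpow b (3 * p)))
               * rpow (Rabs (f' b)) q) (1 / q).
Proof.
  assert (Hb0 : 0 < b) by lra.
  set (al := 1 / q).
  assert (Hal : 0 < al < 1).
  { unfold al. split. apply Rdiv_lt_0_compat; lra.
    apply (Rmult_lt_reg_r q); [lra|]. unfold Rdiv. rewrite Rmult_assoc, Rinv_l; lra. }
  set (D := ln b - ln a).
  assert (HD : 0 < D) by (unfold D; pose proof (ln_increasing a b); lra).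
  set (s1 := 3 * (q - p) / (q - 1)).
  assert (Hs1 : 0 < s1) by (unfold s1; apply Rdiv_lt_0_compat; lra).
  set (s2 := 3 * p).
  assert (Hs2 : 0 < s2) by (unfold s2; lra).
  rewrite (rpow_pos_eq a s1), (rpow_pos_eq b s1), (rpow_pos_eq a s2), (rpow_pos_eq b s2) by lra.
  set (L1 := logmean (Rpower a s1) (Rpower b s1)).
  set (L2 := logmean (Rpower a s2) (Rpower b s2)).
  assert (HL : forall s, 0 < s -> logmean (Rpower a s) (Rpower b s) = (Rpower b s - Rpower a s) / (s * D)
     /\ Rpower a s < logmean (Rpower a s) (Rpower b s) < Rpower b s).
  { intros s Hs. assert (Hlt : Rpower a s < Rpower b s) by (apply Rlt_Rpower_l; lra).
    assert (Hpa : 0 < Rpower a s) by (unfold Rpower; apply exp_pos).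
    split.
    - unfold logmean. rewrite !ln_Rpower. unfold D. f_equal. ring.
    - apply logmean_bounds; lra. }
  destruct (HL s1 Hs1) as [HL1e HL1b]. destruct (HL s2 Hs2) as [HL2e HL2b].
  fold L1 in HL1e, HL1b. fold L2 in HL2e, HL2b. clear HL.
  set (am := rpow a (1/m)) in *.
  set (Hb := rpow (Rabs (f' b)) q).
  set (Hav := rpow (Rabs (f' am)) q).
  assert (HHb : 0 <= Hb) by apply rpow_ge0.
  assert (HHa : 0 <= Hav) by apply rpow_ge0.
  set (t := fun x => (ln b - ln x) / D).
  set (w0 := fun x => (1 - t x) * Hb + m * t x * Hav).
  assert (Hpt : forall x, a <= x <= b -> rpow (Rabs (f' x)) q <= w0 x).
  { intros x Hx.
    assert (Hx0 : 0 < x) by lra.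
    assert (Ht : 0 <= t x <= 1).
    { unfold t. pose proof (ln_le a x Ha (proj1 Hx)). pose proof (ln_le x b Hx0 (proj2 Hx)).
      split. apply Rdiv_le_0_compat; lra.
      apply (Rmult_le_reg_r D); [lra|]. unfold Rdiv. rewrite Rmult_assoc, Rinv_l by lra. unfold D; lra. }
    assert (Ham : 0 < am) by (unfold am; rewrite rpow_pos_eq by lra; unfold Rpower; apply exp_pos).
    pose proof (Hconv b am (1 - t x)) as HC.
    assert (Hmax1 := Rmax_l am b). assert (Hmax2 := Rmax_r am b).
    specialize (HC ltac:(lra) ltac:(lra) ltac:(lra)). cbv beta in HC.
    rewrite rpow_1 in HC by lra.
    replace (rpow b (1 - t x) * rpow am (m * (1 - (1 - t x)))) with x in HC.
    { unfold w0. fold Hb Hav in HC. lra. }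
    rewrite !rpow_pos_eq by lra. unfold am. rewrite rpow_pos_eq by lra.
    unfold Rpower. rewrite ln_exp, <- exp_plus.
    rewrite <- (exp_ln x) at 1 by lra. f_equal. unfold t, D. unfold D in HD. field. split; lra. }
  destruct (ftc f f' a b Ha Hab Hder pr) as [Pp [HPd HPi]].
  rewrite HPi.
  set (F := fun y => y^2/2 * f y - Pp y).
  replace ((b^2*f b - a^2*f a)/2 - (Pp b - Pp a)) with (F b - F a) by (unfold F; field).
  assert (HF : forall x, a<=x<=b -> derivable_pt_lim F x (x^2/2 * f' x)).
  { intros x Hx.
    assert (Hsq : derivable_pt_lim (fun y => y^2/2) x (x)).
    { apply is_derive_Reals. auto_derive; auto. field. }
    pose proof (derivable_pt_lim_mult _ _ _ _ _ Hsq (Hder x ltac:(lra))) as Hm1.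
    pose proof (derivable_pt_lim_minus _ _ _ _ _ Hm1 (HPd x Hx)) as Hm2.
    replace (x^2/2 * f' x) with (x * f x + x ^ 2 / 2 * f' x - x * f x) by ring.
    exact Hm2. }
  assert (HRHS0 : 0 <= rpow D (1 - al) / 2 * rpow (1 / s2) al * rpow L1 (1 - al) *
     rpow (m * (L2 - Rpower a s2) * Hav + (Rpower b s2 - L2) * Hb) al).
  { pose proof (rpow_ge0 D (1-al)). pose proof (rpow_ge0 (1/s2) al).
    pose proof (rpow_ge0 L1 (1-al)).
    pose proof (rpow_ge0 (m * (L2 - Rpower a s2) * Hav + (Rpower b s2 - L2) * Hb) al).
    apply Rmult_le_pos; [|lra]. apply Rmult_le_pos; [|lra]. apply Rmult_le_pos; lra. }
  destruct (Req_dec (Hav + Hb) 0) as [H0|H0].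
  { assert (Hz : forall x, a <= x <= b -> f' x = 0).
    { intros x Hx. pose proof (Hpt x Hx) as Hp1. unfold w0 in Hp1.
      assert (Hav = 0) by lra. assert (Hb = 0) by lra.
      rewrite H, H1 in Hp1. 
      destruct (Req_dec (f' x) 0) as [|Hn]; auto.
      rewrite rpow_pos_eq in Hp1 by (apply Rabs_pos_lt; auto).
      unfold Rpower in Hp1. pose proof (exp_pos (q * ln (Rabs (f' x)))). lra. }
    apply Rle_trans with (0 - 0); [|lra].
    apply (cmp F (fun x => x^2/2 * f' x) (fun _ => 0) (fun _ => 0) a b Hab HF).
    - intros; apply derivable_pt_lim_const.
    - intros x Hx. rewrite Hz by auto. rewrite Rmult_0_r, Rabs_R0. lra. }
  set (E := m * (L2 - Rpower a s2) * Hav + (Rpower b s2 - L2) * Hb) in *.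
  assert (HE : 0 < E).
  { assert (0 < m * (L2 - Rpower a s2)) by (apply Rmult_lt_0_compat; lra).
    unfold E. destruct (Req_dec Hav 0) as [Z|Z].
    - rewrite Z in *. assert (0 < Hb) by lra. nra.
    - assert (0 < Hav) by lra. nra. }
  assert (HPa1 : 0 < Rpower a s1) by (unfold Rpower; apply exp_pos).
  set (P := D * L1).
  assert (HP : 0 < P) by (unfold P; apply Rmult_lt_0_compat; lra).
  set (Q := E / s2).
  assert (HQ : 0 < Q) by (unfold Q; apply Rdiv_lt_0_compat; lra).
  set (K := rpow P (1-al) * rpow Q al).
  assert (HK : 0 <= K) by (unfold K; apply Rmult_le_pos; apply rpow_ge0).
  assert (HRK : rpow D (1 - al) / 2 * rpow (1 / s2) al * rpow L1 (1 - al) * rpow E al = K / 2).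
  { unfold K, P, Q. rewrite rpow_mult_distr by lra.
    replace (E / s2) with ((1/s2) * E) by (field; lra).
    rewrite (rpow_mult_distr (1/s2)) by (try apply Rdiv_le_0_compat; lra). field. }
  rewrite HRK.
  set (Phi := fun y => K/2 * ((1-al)/P * (exp (s1 * ln y)/s1) + al/Q * (Hb * (exp (s2*ln y)/s2)
      + (m*Hav - Hb) * ((exp (s2*ln y) * (ln b - ln y)/s2 + exp (s2*ln y)/(s2*s2))/D)))).
  set (Phi' := fun y => K/(2*y) * ((1-al) * (exp (s1*ln y)/P) + al * (exp (s2*ln y) * w0 y / Q))).
  assert (HPhi : Phi b - Phi a = K/2).
  { set (T := fun y => (Rpower y s2 * (ln b - ln y)/s2 + Rpower y s2/(s2*s2))/D).
    assert (HP1 : (Rpower b s1 - Rpower a s1)/s1 = P).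
    { unfold P. rewrite HL1e. field. split; lra. }
    assert (HQ1 : Hb * ((Rpower b s2 - Rpower a s2)/s2) + (m*Hav - Hb) * (T b - T a) = Q).
    { unfold Q, E, T. rewrite HL2e. unfold D. unfold D in HD. field. split; lra. }
    replace (Phi b - Phi a) with (K/2 * ((1-al)/P * ((Rpower b s1 - Rpower a s1)/s1)
       + al/Q * (Hb * ((Rpower b s2 - Rpower a s2)/s2) + (m*Hav - Hb) * (T b - T a)))).
    2:{ unfold Phi, T, Rpower. field. repeat split; lra. }
    rewrite HP1, HQ1. field. split; lra. }
  rewrite <- HPhi.
  apply (cmp F (fun x => x^2/2 * f' x) Phi Phi' a b Hab HF).
  - intros x Hx. assert (Hx0 : 0 < x) by lra.
    assert (HP0 : P <> 0) by lra. assert (HQ0 : Q <> 0) by lra.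
    assert (HD0 : D <> 0) by lra. assert (Hs10 : s1 <> 0) by lra. assert (Hs20 : s2 <> 0) by lra.
    unfold Phi, Phi', w0, t.
    clearbody K P Q al D s1 s2 Hb Hav.
    apply is_derive_Reals. auto_derive.
    + repeat split; lra.
    + field. repeat split; lra.
  - intros x Hx. assert (Hx0 : 0 < x) by lra.
    pose proof (Hpt x Hx) as Hp1.
    assert (Hw : 0 <= w0 x) by (pose proof (rpow_ge0 (Rabs (f' x)) q); lra).
    assert (Hf1 : Rabs (f' x) <= rpow (w0 x) al).
    { rewrite <- (rpow_inv_q (Rabs (f' x)) q) by (try apply Rabs_pos; lra).
      apply rpow_le_base; [split; [apply rpow_ge0 | exact Hp1] | lra]. }
    set (U := exp (s1 * ln x) / P).
    set (V := exp (s2 * ln x) * w0 x / Q).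
    assert (HU : 0 <= U) by (unfold U; apply Rdiv_le_0_compat; [left; apply exp_pos|lra]).
    assert (HV : 0 <= V).
    { unfold V; apply Rdiv_le_0_compat; [|lra]. apply Rmult_le_pos; [left; apply exp_pos|lra]. }
    pose proof (amgm U V al HU HV Hal) as HAM.
    assert (Hid : K * (rpow U (1-al) * rpow V al) = x^3 * rpow (w0 x) al).
    { unfold K.
      transitivity (rpow (P*U) (1-al) * rpow (Q*V) al).
      { rewrite !rpow_mult_distr by lra. ring. }
      replace (P*U) with (exp (s1 * ln x)) by (unfold U; field; lra).
      replace (Q*V) with (exp (s2 * ln x) * w0 x) by (unfold V; field; lra).
      rewrite rpow_mult_distr by (try (left; apply exp_pos); lra).
      rewrite !rpow_pos_eq by (apply exp_pos). unfold Rpower. rewrite !ln_exp.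
      replace (x^3) with (exp (3 * ln x)).
      2:{ rewrite <- (Rpower_pow 3 x) by lra. unfold Rpower. f_equal. simpl. ring. }
      rewrite <- Rmult_assoc, <- exp_plus.
      f_equal. f_equal. unfold al, s1, s2. field. split; lra. }
    unfold Phi'. fold U V.
    rewrite Rabs_mult, (Rabs_pos_eq (x^2/2)) by (pose proof (pow2_ge_0 x); lra).
    apply Rle_trans with (x^2/2 * rpow (w0 x) al).
    { apply Rmult_le_compat_l; [pose proof (pow2_ge_0 x); lra | exact Hf1]. }
    replace (x^2/2 * rpow (w0 x) al) with (K/(2*x) * (rpow U (1-al) * rpow V al)).
    2:{ replace (K / (2*x) * (rpow U (1 - al) * rpow V al)) with (K * (rpow U (1 - al) * rpow V al) / (2*x)) by (field; lra).
        rewrite Hid. field. lra. }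
    apply Rmult_le_compat_l; [|exact HAM].
    apply Rdiv_le_0_compat; lra.
Qed.
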